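(* Let $r>0$, $\varepsilon\in(0,1)$, $n\geq 1$ an integer, and $T\subset rB_2^d$ with $|T|\geq(\frac{2}{\varepsilon}+1)^n$. Then there exist vectors $t_k,s_k\in T$ and $u_k,v_k\in\mathbb{R}^d$, $k=1,\dots,n$, such that for every $k$, $0\neq t_k-s_k=u_k+v_k$ and $|v_k|\leq\varepsilon r$, and the vectors $u_1,\dots,u_n$ are pairwise orthogonal.
   Context: $B_2^d$ is the Euclidean unit ball in $\mathbb{R}^d$, $|\cdot|$ the Euclidean norm, $|T|$ the cardinality of $T$. *)

(* Defs.v *)
From mathcomp Require Import all_boot.
From Stdlib Require Import Reals List.

Definition vec (d : nat) := 'I_d -> R.

Definition vadd {d} (x y : vec d) : vec d := fun i => (x i + y i)%R.
Definition vsub {d} (x y : vec d) : vec d := fun i => (x i - y i)%R.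

Definition dot {d} (x y : vec d) : R := \big[Rplus/0%R]_(i < d) (x i * y i)%R.
Definition enorm {d} (x : vec d) : R := sqrt (dot x x).

(* |T| >= N for a (possibly infinite) set T : T contains at least N distinct
   points, i.e. some duplicate-free list of points of T has length >= N. *)
Definition card_ge {A : Type} (T : A -> Prop) (N : R) : Prop :=
  exists l : list A, NoDup l /\ (forall x, In x l -> T x) /\ (N <= INR (length l))%R.

(* Main.v *)
Require Import Defs.
From HB Require Import structures.
From mathcomp Require Import all_boot.
From Stdlib Require Import Reals List Lra Lia Psatz FunctionalExtensionality.
Open Scope R_scope.
Set Implicit Arguments.
Unset Strict Implicit.

Lemma Rplus_assoc' : associative Rplus.
Proof. move=> x y z; ring. Qed.
HB.instance Definition _ := Monoid.isComLaw.Build R 0%R Rplus Rplus_assoc' Rplus_comm Rplus_0_l.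

Ltac genbig := repeat match goal with
 | |- context [bigop.body ?a ?b ?c] => let x := fresh "B" in set x := (bigop.body a b c); clearbody x
 end.

Notation SUM d F := (\big[Rplus/0%R]_(i < d) F i).

Lemma sum_add d (F G : 'I_d -> R) : \big[Rplus/0]_(i < d) (F i + G i) = SUM d F + SUM d G.
Proof. by rewrite big_split. Qed.

Lemma sum_scal d c (F : 'I_d -> R) : \big[Rplus/0]_(i < d) (c * F i) = c * SUM d F.
Proof.
elim: d F => [|d IH] F. rewrite !big_ord0. ring.
rewrite !big_ord_recr /= IH. genbig. ring.
Qed.

Lemma sum_ge0 d (F : 'I_d -> R) : (forall i, 0 <= F i) -> 0 <= SUM d F.
Proof.
elim: d F => [|d IH] F H; first by rewrite big_ord0; lra.
rewrite big_ord_recr /=. have := IH (fun i => F (widen_ord (leqnSn d) i)) (fun i => H _). have := H ord_max. genbig; lra.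
Qed.

Lemma sum_le d (F G : 'I_d -> R) : (forall i, F i <= G i) -> SUM d F <= SUM d G.
Proof.
elim: d F G => [|d IH] F G H; first by rewrite !big_ord0; lra.
rewrite !big_ord_recr /=.
have := IH (fun i => F (widen_ord (leqnSn d) i)) (fun i => G (widen_ord (leqnSn d) i)) (fun i => H _).
have := H ord_max. genbig; lra.
Qed.

Lemma sum_eq0 d (F : 'I_d -> R) : (forall i, 0 <= F i) -> SUM d F = 0 -> forall i, F i = 0.
Proof.
move=> H0 Hs i. move: Hs. rewrite (bigD1 i) //= => Hs.
have := @sum_ge0 d (fun j => if j != i then F j else 0).
rewrite -big_mkcond => H1.
have H2 : forall j, 0 <= (if j != i then F j else 0) by move=> j; case: (j != i) => //; lra.
have := H1 H2. have := H0 i. move: Hs. genbig. lra.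
Qed.

Lemma sum_single d (F : 'I_d -> R) (k : 'I_d) : (forall i, i != k -> F i = 0) -> SUM d F = F k.
Proof.
move=> H. rewrite (bigD1 k) //= big1; first ring. by move=> i; apply: H.
Qed.

Lemma sum_const_le d (F : 'I_d -> R) c : (forall i, F i <= c) -> SUM d F <= INR d * c.
Proof.
elim: d F => [|d IH] F H; first by rewrite big_ord0 /=; lra.
rewrite big_ord_recr S_INR /=.
have := IH (fun i => F (widen_ord (leqnSn d) i)) (fun i => H _). have := H ord_max. genbig; lra.
Qed.
Definition vscal {d} (c : R) (x : vec d) : vec d := fun i => c * x i.

Lemma dot_comm d (x y : vec d) : dot x y = dot y x.
Proof. rewrite /dot; apply: eq_bigr => i _; ring. Qed.

Lemma dot_addl d (x y z : vec d) : dot (vadd x y) z = dot x z + dot y z.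
Proof. rewrite /dot -sum_add; apply: eq_bigr => i _; rewrite /vadd; ring. Qed.

Lemma dot_subl d (x y z : vec d) : dot (vsub x y) z = dot x z - dot y z.
Proof.
rewrite /dot. have -> : forall a b, a - b = a + (-1) * b by move=> a b; ring.
rewrite -sum_scal -sum_add; apply: eq_bigr => i _; rewrite /vsub; ring.
Qed.

Lemma dot_scall d c (x y : vec d) : dot (vscal c x) y = c * dot x y.
Proof. rewrite /dot -sum_scal; apply: eq_bigr => i _; rewrite /vscal; ring. Qed.

Lemma dot_ge0 d (x : vec d) : 0 <= dot x x.
Proof. apply: sum_ge0 => i; nra. Qed.

Lemma dot_eq0 d (x : vec d) : dot x x = 0 -> forall i, x i = 0.
Proof.
move=> H i. have := @sum_eq0 d (fun i => x i * x i) (fun i => ltac:(nra)) H i. nra.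
Qed.

Lemma CS_aux A B C a b : 0 <= A -> 0 <= B -> C ^ 2 <= A * B ->
  (C + a * b) ^ 2 <= (A + a * a) * (B + b * b).
Proof.
move=> HA HB H.
have E1 : (2*a*b*C)^2 = 4*(a*b)^2 * C^2 by ring.
have E2 : (A*b^2 + a^2*B)^2 = (A*b^2 - a^2*B)^2 + 4*(a*b)^2*(A*B) by ring.
have P1 : 0 <= (A*b^2 - a^2*B)^2 by apply: pow2_ge_0.
have P2 : 0 <= (a*b)^2 by apply: pow2_ge_0.
have P3 : 4*(a*b)^2 * C^2 <= 4*(a*b)^2*(A*B).
  apply: Rmult_le_compat_l => //; lra.
have H1 : (2*a*b*C)^2 <= (A*b^2 + a^2*B)^2 by lra.
have P4 : 0 <= A*b^2 + a^2*B.
  have : 0 <= A * b^2 by apply: Rmult_le_pos => //; apply: pow2_ge_0.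
  have : 0 <= a^2 * B by apply: Rmult_le_pos => //; apply: pow2_ge_0.
  lra.
have H2 : 2*a*b*C <= A*b^2 + a^2*B.
  apply: Rsqr_incr_0_var; rewrite /Rsqr //; lra.
have E3 : (C + a*b)^2 = C^2 + 2*a*b*C + a^2*b^2 by ring.
have E4 : (A + a*a)*(B+b*b) = A*B + (A*b^2 + a^2*B) + a^2*b^2 by ring.
lra.
Qed.

Lemma CS_sum d (F G : 'I_d -> R) :
  (SUM d (fun i => F i * G i)) ^ 2 <= SUM d (fun i => F i * F i) * SUM d (fun i => G i * G i).
Proof.
elim: d F G => [|d IH] F G; first by rewrite !big_ord0; lra.
rewrite !big_ord_recr /=. apply: CS_aux.
- exact: (@sum_ge0 d (fun i => F (widen_ord (leqnSn d) i) * F (widen_ord (leqnSn d) i)) (fun i => ltac:(nra))).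
- exact: (@sum_ge0 d (fun i => G (widen_ord (leqnSn d) i) * G (widen_ord (leqnSn d) i)) (fun i => ltac:(nra))).
- exact: IH.
Qed.

Lemma CS d (x y : vec d) : (dot x y) ^ 2 <= dot x x * dot y y.
Proof. exact: CS_sum. Qed.

Lemma enorm_ge0 d (x : vec d) : 0 <= enorm x.
Proof. apply: sqrt_pos. Qed.

Lemma enorm_sq d (x : vec d) : enorm x * enorm x = dot x x.
Proof. rewrite /enorm sqrt_sqrt //; apply: dot_ge0. Qed.

Lemma dot_le_enorm d (x y : vec d) : dot x y <= enorm x * enorm y.
Proof.
have := CS x y. rewrite -(enorm_sq x) -(enorm_sq y).
have := enorm_ge0 x. have := enorm_ge0 y. move: (enorm x) (enorm y) (dot x y) => a b c Ha Hb H.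
have : 0 <= a * b by nra. nra.
Qed.

Lemma sq_le_sqrt a b : 0 <= b -> a <= b * b -> sqrt a <= b.
Proof.
move=> Hb H. rewrite -(sqrt_square b) //. apply: sqrt_le_1_alt. lra.
Qed.

Lemma enorm_le_of d (x : vec d) b : 0 <= b -> dot x x <= b * b -> enorm x <= b.
Proof. move=> Hb H; exact: sq_le_sqrt. Qed.

Lemma minkowski d (x y : vec d) : enorm (vadd x y) <= enorm x + enorm y.
Proof.
apply: enorm_le_of; first by have := enorm_ge0 x; have := enorm_ge0 y; lra.
rewrite dot_addl !(dot_comm _ (vadd x y)) !dot_addl.
have := dot_le_enorm x y. rewrite (dot_comm y x) -(enorm_sq x) -(enorm_sq y). nra.
Qed.

Lemma enorm_scal d c (x : vec d) : enorm (vscal c x) = Rabs c * enorm x.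
Proof.
rewrite /enorm dot_scall (dot_comm x) dot_scall.
rewrite -Rmult_assoc sqrt_mult_alt; last by nra.
by rewrite -sqrt_Rsqr_abs.
Qed.

Lemma enorm_rev d (x y : vec d) : enorm x - enorm y <= enorm (vadd x y).
Proof.
have E : x = vadd (vadd x y) (vscal (-1) y).
  apply: functional_extensionality => i; rewrite /vadd /vscal; ring.
have := minkowski (vadd x y) (vscal (-1) y). rewrite -E enorm_scal.
have -> : Rabs (-1) = 1 by rewrite Rabs_Ropp Rabs_R1. lra.
Qed.

Lemma coord_le d (x : vec d) i : Rabs (x i) <= enorm x.
Proof.
apply: (Rle_trans _ (sqrt (x i * x i))).
  rewrite -sqrt_Rsqr_abs /Rsqr; lra.
apply: sqrt_le_1_alt. rewrite /dot (bigD1 i) //=.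
have := @sum_ge0 d (fun j => if j != i then x j * x j else 0).
rewrite -big_mkcond => H. have := H (fun j => ltac:(case: (j != i); nra)). genbig. lra.
Qed.

Lemma dot_le_box d (x : vec d) h : (forall i, Rabs (x i) <= h) -> dot x x <= INR d * (h * h).
Proof.
move=> H. apply: sum_const_le => i. have := H i. have := Rabs_pos (x i).
have -> : x i * x i = Rabs (x i) * Rabs (x i).
  by rewrite -Rabs_mult Rabs_pos_eq //; nra.
nra.
Qed.
From Stdlib Require Import ZArith.

Definition vzero {d} : vec d := fun _ => 0.

Lemma enorm_zero d : enorm (@vzero d) = 0.
Proof.
rewrite /enorm /dot big1 ?sqrt_0 // => i _; rewrite /vzero; ring.
Qed.

Lemma vsub_eq d (x y : vec d) : vsub x y = vadd x (vscal (-1) y).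
Proof. apply: functional_extensionality => i; rewrite /vsub /vadd /vscal; ring. Qed.

Lemma enorm_sub_le d (x y : vec d) : enorm (vsub x y) <= enorm x + enorm y.
Proof.
rewrite vsub_eq. apply: Rle_trans (minkowski _ _) _. rewrite enorm_scal.
have -> : Rabs (-1) = 1 by rewrite Rabs_Ropp Rabs_R1. lra.
Qed.

Lemma INR_expn a b : INR (expn a b) = INR a ^ b.
Proof. elim: b => [|b IH] //=. by rewrite expnS -multE mult_INR IH. Qed.

Lemma finite_gap (T : eqType) (s : seq.seq T) (f : T -> R) c :
  (forall a, a \in s -> c < f a) -> exists g, c < g /\ forall a, a \in s -> g <= f a.
Proof.
elim: s => [|a s IH] H.
  exists (c + 1); split; [lra| by []].
have [g [Hg1 Hg2]] := IH (fun b Hb => H b (ltac:(by rewrite seq.in_cons Hb orbT))).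
have Ha := H a (mem_head _ _).
exists (Rmin (f a) g); split; first by apply: Rmin_glb_lt.
move=> b; rewrite seq.in_cons => /orP [/eqP -> | Hb]; first by apply: Rmin_l.
apply: Rle_trans (Rmin_r _ _) (Hg2 b Hb).
Qed.

Lemma pow_le1' x k : 0 <= x <= 1 -> x ^ k <= 1.
Proof.
move=> H; elim: k => [|k IH] /=; first lra.
have : 0 <= x ^ k by apply: pow_le; lra. nra.
Qed.

Section Pack.
Variables (m N : nat) (y : 'I_N -> vec m) (r del mu : R).
Hypotheses (hr : 0 < r) (hd : 0 < del) (hmu : mu = del / (2 * r + del)).
Hypothesis hy : forall i, enorm (y i) <= r.

Fixpoint Fv (s : seq.seq 'I_N) : vec m :=
  match s with
  | [::] => vzero
  | i :: s' => vscal mu (vadd (y i) (Fv s'))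
  end.

Lemma mu_pos : 0 < mu.
Proof. rewrite hmu; apply: Rdiv_lt_0_compat; lra. Qed.

Lemma mu_lt1 : mu < 1.
Proof. rewrite hmu. apply: (Rmult_lt_reg_r (2 * r + del)); first lra.
rewrite /Rdiv Rmult_assoc Rinv_l; lra. Qed.

Lemma Fv_bound s : enorm (Fv s) <= del / 2.
Proof.
elim: s => [|i s IH] /=; first by rewrite enorm_zero; lra.
rewrite enorm_scal Rabs_pos_eq; last by have := mu_pos; lra.
apply: (Rle_trans _ (mu * (r + del / 2))).
  apply: Rmult_le_compat_l; first by have := mu_pos; lra.
  apply: Rle_trans (minkowski _ _) _. have := hy i; lra.
rewrite hmu. apply: Req_le. field. lra.
Qed.

Lemma Fv_sep g : (forall i j, i <> j -> g <= enorm (vsub (y i) (y j))) -> del < g ->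
  forall s s', size s = size s' -> s <> s' ->
  mu ^ size s * (g - del) <= enorm (vsub (Fv s) (Fv s')).
Proof.
move=> Hg Hdg. have Hm0 := mu_pos. have Hm1 := mu_lt1.
elim=> [|i s IH] [|i' s'] //= Hsz Hne.
have Hsz' : size s = size s' by case: Hsz.
have E : vsub (vscal mu (vadd (y i) (Fv s))) (vscal mu (vadd (y i') (Fv s'))) =
         vscal mu (vadd (vsub (y i) (y i')) (vsub (Fv s) (Fv s'))).
  apply: functional_extensionality => j; rewrite /vsub /vscal /vadd; ring.
rewrite E enorm_scal Rabs_pos_eq; last lra.
have Hpow : mu ^ size s <= 1 by apply: pow_le1'; lra.
case: (eqVneq i i') => [Eii | Nii].
  subst i'.
  have Hss : s <> s' by move=> Es; apply: Hne; rewrite Es.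
  have Ed : vadd (vsub (y i) (y i)) (vsub (Fv s) (Fv s')) = vsub (Fv s) (Fv s').
    apply: functional_extensionality => j; rewrite /vsub /vadd; ring.
  rewrite Ed. have := IH s' Hsz' Hss. nra.
have H1 := enorm_rev (vsub (y i) (y i')) (vsub (Fv s) (Fv s')).
have H2 := Hg i i' (fun E => ltac:(by rewrite E eqxx in Nii)).
have H3 := enorm_sub_le (Fv s) (Fv s').
have H4 := Fv_bound s. have H5 := Fv_bound s'.
have H6 : g - del <= enorm (vadd (vsub (y i) (y i')) (vsub (Fv s) (Fv s'))) by lra.
have H7 : 0 <= mu ^ size s by apply: pow_le; lra.
have H8 : mu ^ size s * (g - del) <= g - del by nra.
rewrite Rmult_assoc. apply: Rmult_le_compat_l; lra.
Qed.
End Pack.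

Lemma up_pos a : 0 <= a -> (0 < up a)%Z.
Proof. move=> Ha. have [H1 _] := archimed a. apply: lt_IZR. lra. Qed.

Lemma INR_up a : 0 <= a -> INR (Z.to_nat (up a)) = IZR (up a).
Proof. move=> Ha. rewrite INR_IZR_INZ Z2Nat.id //. have := up_pos Ha; lia. Qed.

Lemma Rabs_le_inv x b : Rabs x <= b -> - b <= x <= b.
Proof. move=> H; split; [have := Rle_abs (-x); rewrite Rabs_Ropp | have := Rle_abs x]; lra. Qed.

Lemma Rdiv_le_0_compat a b : 0 <= a -> 0 < b -> 0 <= a / b.
Proof. move=> Ha Hb. apply: Rmult_le_pos => //. apply: Rlt_le; apply: Rinv_0_lt_compat => //. Qed.

Section Cells.
Variables (h B : R).
Hypotheses (hh : 0 < h) (hB : 0 < B).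

Definition cellz (x : R) : nat := Z.to_nat (up ((x + B) / h)).
Definition K0 : nat := Z.to_nat (up (2 * B / h)).

Lemma cell_le x : Rabs x <= B -> leq (cellz x) K0.
Proof.
move=> Hx. have Hx' := Rabs_le_inv Hx.
have Ha : 0 <= (x + B) / h by apply: Rdiv_le_0_compat; lra.
have Hb : (x + B) / h <= 2 * B / h.
  apply: Rmult_le_compat_r; [apply: Rlt_le; apply: Rinv_0_lt_compat => //|lra].
have Hb0 : 0 <= 2 * B / h by apply: Rdiv_le_0_compat; lra.
have [A1 A2] := archimed ((x + B) / h). have [B1 B2] := archimed (2 * B / h).
have Hz : (up ((x + B) / h) <= up (2 * B / h))%Z.
  have : (up ((x + B) / h) < up (2 * B / h) + 1)%Z.
    apply: lt_IZR. rewrite plus_IZR. lra.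
  lia.
rewrite /cellz /K0. apply/leP. apply Z2Nat.inj_le => //.
- have := up_pos Ha; lia.
- have := up_pos Hb0; lia.
Qed.

Lemma cell_close x x' : Rabs x <= B -> Rabs x' <= B -> cellz x = cellz x' -> Rabs (x - x') < h.
Proof.
move=> Hx Hx' E. have := Rabs_le_inv Hx. have := Rabs_le_inv Hx'. move=> H1 H2.
have Ha : 0 <= (x + B) / h by apply: Rdiv_le_0_compat; lra.
have Ha' : 0 <= (x' + B) / h by apply: Rdiv_le_0_compat; lra.
have Eu : up ((x + B) / h) = up ((x' + B) / h).
  apply: Z2Nat.inj => //. have := up_pos Ha; lia. have := up_pos Ha'; lia.
have [A1 A2] := archimed ((x + B) / h). have [B1 B2] := archimed ((x' + B) / h).
rewrite Eu in A1 A2.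
have E1 : (x + B) / h - (x' + B) / h = (x - x') / h by field; lra.
have E2 : x - x' = h * ((x - x') / h) by field; lra.
have D : -1 < (x - x') / h < 1 by lra.
apply: Rabs_def1; rewrite E2; nra.
Qed.

Lemma INR_K0 : INR K0.+1 <= 2 * B / h + 2.
Proof.
rewrite S_INR /K0 INR_up; last by apply: Rdiv_le_0_compat; lra.
have [A1 A2] := archimed (2 * B / h). lra.
Qed.
End Cells.

Lemma pack_count m N (y : 'I_N -> vec m) r del mu g k :
  0 < r -> 0 < del -> mu = del / (2 * r + del) -> (forall i, enorm (y i) <= r) ->
  (forall i j, i <> j -> g <= enorm (vsub (y i) (y j))) -> del < g ->
  INR N ^ k <= (del / (mu ^ k * (g - del) / (INR m + 1)) + 2) ^ m.
Proof.
move=> hr hd hmu hy Hg Hdg.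
have Hm0 : 0 < mu by rewrite hmu; apply: Rdiv_lt_0_compat; lra.
have Hmk : 0 < mu ^ k by apply: pow_lt.
have HmR : 0 < INR m + 1 by have := pos_INR m; lra.
set h := mu ^ k * (g - del) / (INR m + 1).
have hh : 0 < h by rewrite /h; apply: Rdiv_lt_0_compat => //; apply: Rmult_lt_0_compat; lra.
have hB : 0 < del / 2 by lra.
have Hco : forall (t : seq.seq 'I_N) j, Rabs (Fv y mu t j) <= del / 2.
  move=> t j. apply: Rle_trans (coord_le _ j) (Fv_bound hr hd hmu hy t).
pose f (t : k.-tuple 'I_N) : {ffun 'I_m -> 'I_(K0 h (del / 2)).+1} :=
  [ffun j => inord (cellz h (del / 2) (Fv y mu t j))].
have finj : injective f.
  move=> t t' E. case: (eqVneq t t') => [//|Ne].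
  have Ne' : tval t <> tval t' by move=> E'; move: Ne; rewrite (val_inj E') eqxx.
  have Hs := Fv_sep hr hd hmu hy Hg Hdg (etrans (size_tuple t) (esym (size_tuple t'))) Ne'.
  exfalso.
  have Hc : forall j, Rabs (vsub (Fv y mu t) (Fv y mu t') j) < h.
    move=> j. have Ej : f t j = f t' j by rewrite E.
    rewrite /f !ffunE in Ej.
    have Ej' := congr1 val Ej.
    have L1 := cell_le hh hB (Hco t j).
    have L2 := cell_le hh hB (Hco t' j).
    rewrite /= (@inordK _ (cellz h (del / 2) (Fv y mu t j)) L1) (@inordK _ _ L2) in Ej'.
    exact: (cell_close hh (Hco t j) (Hco t' j) Ej').
  have Hd := dot_le_box (fun j => Rlt_le _ _ (Hc j)).
  rewrite size_tuple in Hs.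
  have He := enorm_sq (vsub (Fv y mu t) (Fv y mu t')).
  have He0 := enorm_ge0 (vsub (Fv y mu t) (Fv y mu t')).
  have Eh : mu ^ k * (g - del) = h * (INR m + 1) by rewrite /h; field; lra.
  rewrite Eh in Hs.
  have Hm : 0 <= INR m := pos_INR m.
  move: Hs Hd He He0. move: (enorm _) (dot _ _) => a b Hs Hd He He0.
  have H1 : (h * (INR m + 1)) * (h * (INR m + 1)) <= a * a.
    apply: Rmult_le_compat => //; nra.
  have H2 : 0 < h * h by nra.
  have H3 : (h * (INR m + 1)) * (h * (INR m + 1)) = h * h * (INR m * INR m + INR m + 1) + INR m * (h * h) by ring.
  have H4 : 0 < h * h * (INR m * INR m + INR m + 1) by apply: Rmult_lt_0_compat; nra.
  lra.
have Hc := leq_card f finj.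
rewrite card_tuple card_ffun !card_ord in Hc.
have := le_INR _ _ (elimT leP Hc). rewrite !INR_expn => H.
apply: Rle_trans H _. apply: pow_incr. split; first by apply: pos_INR.
have := INR_K0 hh hB. have -> : 2 * (del / 2) = del by field. done.
Qed.

Lemma pow_pow_swap x a b : (x ^ a) ^ b = (x ^ b) ^ a.
Proof. by rewrite -!pow_mult Nat.mul_comm. Qed.

Lemma packing m N (y : 'I_N -> vec m) r del :
  0 < r -> 0 < del -> (forall i, enorm (y i) <= r) ->
  (forall i j, i <> j -> del < enorm (vsub (y i) (y j))) ->
  INR N < ((2 * r + del) / del) ^ m.+1.
Proof.
move=> hr hd hy Hsep.
have Hpos : forall p : 'I_N * 'I_N, p \in enum {: 'I_N * 'I_N} ->
    del < (if p.1 == p.2 then del + 1 else enorm (vsub (y p.1) (y p.2))).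
  move=> [i j] _ /=. case: (eqVneq i j) => [_|Hne]; first lra.
  apply: Hsep; exact/eqP.
have [g [Hdg Hg']] := @finite_gap _ (enum {: 'I_N * 'I_N})
  (fun p => if p.1 == p.2 then del + 1 else enorm (vsub (y p.1) (y p.2))) del Hpos.
have Hg : forall i j, i <> j -> g <= enorm (vsub (y i) (y j)).
  move=> i j Hij. have := Hg' (i, j). rewrite mem_enum /=.
  case: (eqVneq i j) => // _ H. exact: H.
set lam := (2 * r + del) / del.
set mu := del / (2 * r + del).
have Hlam : lam = 1 + 2 * r / del by rewrite /lam; field; lra.
have Hlam0 : 0 < lam by rewrite /lam; apply: Rdiv_lt_0_compat; lra.
have Hmu : 0 < mu by rewrite /mu; apply: Rdiv_lt_0_compat; lra.
have Hml : mu * lam = 1 by rewrite /mu /lam; field; lra.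
set M := INR m + 1.
have HM : 0 < M by rewrite /M; have := pos_INR m; lra.
set C := del * M / (g - del) + 2.
have HC0 : 0 < del * M / (g - del) by apply: Rdiv_lt_0_compat; nra.
have HC : 0 < C by rewrite /C; lra.
set x := 2 * r / del.
have Hx : 0 < x by rewrite /x; apply: Rdiv_lt_0_compat; lra.
set k := Z.to_nat (up (C ^ m / x)).
have HCm : 0 <= C ^ m / x by apply: Rdiv_le_0_compat => //; apply: pow_le; lra.
have Hk : C ^ m < INR k * x.
  rewrite /k INR_up //. have [A1 _] := archimed (C ^ m / x).
  have : C ^ m / x * x = C ^ m by field; lra. nra.
have Hlk : C ^ m < lam ^ k.
  rewrite Hlam -/x. have := poly k x Hx. lra.
have Hcount := pack_count k hr hd (erefl mu) hy Hg Hdg.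
have Hmuk : mu ^ k * lam ^ k = 1 by rewrite -Rpow_mult_distr Hml pow1.
have Hmk0 : 0 < mu ^ k by apply: pow_lt.
have Hkx : 0 <= INR k * x by apply: Rmult_le_pos; [apply: pos_INR|lra].
have Hlk1 : 1 <= lam ^ k by rewrite Hlam -/x; have := poly k x Hx; lra.
have Hlk0 : 0 < lam ^ k by lra.
have E1 : del / (mu ^ k * (g - del) / M) = del * M / (g - del) * lam ^ k.
  have -> : lam ^ k = / mu ^ k by apply: (Rmult_eq_reg_l (mu ^ k)); [rewrite Hmuk Rinv_r //|]; lra.
  field; lra.
rewrite E1 in Hcount.
have Hb : del * M / (g - del) * lam ^ k + 2 <= C * lam ^ k by rewrite /C; lra.
have Hcount2 : INR N ^ k <= (C * lam ^ k) ^ m.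
  apply: Rle_trans Hcount _. apply: pow_incr; split => //.
  have : 0 <= del * M / (g - del) * lam ^ k by apply: Rmult_le_pos; lra.
  lra.
rewrite Rpow_mult_distr in Hcount2.
apply: Rnot_le_lt => HN.
have H1 : (lam ^ m.+1) ^ k <= INR N ^ k.
  apply: pow_incr; split => //. apply: pow_le; lra.
rewrite pow_pow_swap -tech_pow_Rmult in H1.
have Hlkm : 0 < (lam ^ k) ^ m by apply: pow_lt.
have : lam ^ k * (lam ^ k) ^ m <= C ^ m * (lam ^ k) ^ m by lra.
move=> H2. have := Rmult_le_reg_r _ _ _ Hlkm H2. lra.
Qed.

Lemma sum_scal_r d c (F : 'I_d -> R) : \big[Rplus/0]_(i < d) (F i * c) = SUM d F * c.
Proof. rewrite Rmult_comm -sum_scal; apply: eq_bigr => i _; ring. Qed.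

Lemma dot_add_sq d (a b : vec d) : dot (vadd a b) (vadd a b) = dot a a + 2 * dot a b + dot b b.
Proof. rewrite dot_addl !(dot_comm _ (vadd a b)) !dot_addl (dot_comm b a). ring. Qed.

Section Proj.
Variables (d m : nat) (u : 'I_m -> vec d).
Hypothesis horth : forall j j', j <> j' -> dot (u j) (u j') = 0.

Definition ee j : vec d := vscal (/ sqrt (dot (u j) (u j))) (u j).
Definition phi (x : vec d) : vec m := fun j => dot x (ee j).
Definition Pr (w : vec d) : vec d := fun i => \big[Rplus/0]_(j < m) (dot w (ee j) * ee j i).

Lemma ee_orth j j' : j <> j' -> dot (ee j) (ee j') = 0.
Proof.
move=> H. rewrite /ee dot_scall dot_comm dot_scall (horth (j := j') (j' := j)); first ring. by move=> E; apply: H.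
Qed.

Lemma u_ee j : u j = vscal (sqrt (dot (u j) (u j))) (ee j).
Proof.
apply: functional_extensionality => i. rewrite /ee /vscal.
have := dot_ge0 (u j). case=> [Hp|H0].
  have Hs : 0 < sqrt (dot (u j) (u j)) by apply: sqrt_lt_R0.
  field. lra.
rewrite (dot_eq0 (esym H0) i). ring.
Qed.

Lemma ee_self w j : dot w (ee j) * dot (ee j) (ee j) = dot w (ee j).
Proof.
have := dot_ge0 (u j). case=> [Hp|H0].
  have Hs : 0 < sqrt (dot (u j) (u j)) by apply: sqrt_lt_R0.
  have E1 : dot (ee j) (ee j) = 1.
    rewrite /ee dot_scall dot_comm dot_scall.
    have Hss := sqrt_sqrt (dot (u j) (u j)) (Rlt_le _ _ Hp).
    move: Hs Hss. move: (sqrt _) => a Ha <-. field. lra.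
  rewrite E1; ring.
have Ez : forall i, ee j i = 0 by move=> i; rewrite /ee /vscal (dot_eq0 (esym H0) i); ring.
have -> : dot w (ee j) = 0 by rewrite /dot big1 // => i _; rewrite Ez; ring.
ring.
Qed.

Lemma dot_Pr w y : dot (Pr w) y = \big[Rplus/0]_(j < m) (dot w (ee j) * dot (ee j) y).
Proof.
rewrite {1}/dot /Pr.
under eq_bigr => i _ do rewrite -sum_scal_r.
rewrite exchange_big /=. apply: eq_bigr => j _. rewrite [dot (ee j) y]/dot -sum_scal. apply: eq_bigr => i _. ring.
Qed.

Lemma Pr_ee w l : dot (Pr w) (ee l) = dot w (ee l).
Proof.
rewrite dot_Pr (@sum_single _ _ l); first exact: ee_self.
move=> j Hj. rewrite ee_orth; first ring. by move=> E; rewrite E eqxx in Hj.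
Qed.

Lemma Pr_orth w l : dot (vsub w (Pr w)) (u l) = 0.
Proof.
rewrite dot_comm u_ee dot_scall dot_comm dot_subl Pr_ee. ring.
Qed.

Lemma Pr_sq w : dot (Pr w) (Pr w) = dot (phi w) (phi w).
Proof.
rewrite dot_Pr [dot (phi w) _]/dot /phi. apply: eq_bigr => j _. rewrite (dot_comm (ee j)) Pr_ee. ring.
Qed.

Lemma bessel x : dot (phi x) (phi x) <= dot x x.
Proof.
rewrite -Pr_sq.
have E : x = vadd (Pr x) (vsub x (Pr x)).
  apply: functional_extensionality => i; rewrite /vadd /vsub; ring.
have H0 : dot (vsub x (Pr x)) (Pr x) = 0.
  rewrite dot_comm dot_Pr big1 // => j _. rewrite (dot_comm (ee j)) dot_subl Pr_ee. ring.
have Ex : dot x x = dot (Pr x) (Pr x) + dot (vsub x (Pr x)) (vsub x (Pr x)).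
  have Ex0 := dot_add_sq (Pr x) (vsub x (Pr x)). rewrite -E in Ex0.
  rewrite Ex0 (dot_comm (Pr x) (vsub x (Pr x))) H0. ring.
have := dot_ge0 (vsub x (Pr x)). lra.
Qed.

Lemma phi_sub t s : phi (vsub t s) = vsub (phi t) (phi s).
Proof. apply: functional_extensionality => j; rewrite /phi /vsub dot_subl //. Qed.

Lemma enorm_phi x : enorm (phi x) <= enorm x.
Proof. apply: sqrt_le_1_alt. apply: bessel. Qed.

Lemma enorm_Pr w : enorm (Pr w) = enorm (phi w).
Proof. by rewrite /enorm Pr_sq. Qed.
End Proj.
From Stdlib Require Import Classical.

Lemma step d m (u : 'I_m -> vec d) (l : list (vec d)) r eps n :
  0 < r -> 0 < eps -> (forall x, In x l -> enorm x <= r) -> NoDup l -> leq m.+1 n ->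
  (2 / eps + 1) ^ n <= INR (length l) ->
  (forall j j', j <> j' -> dot (u j) (u j') = 0) ->
  exists t s uu vv, In t l /\ In s l /\ t <> s /\ vsub t s = vadd uu vv /\
    enorm vv <= eps * r /\ forall j, dot uu (u j) = 0.
Proof.
move=> hr he hl hnd hmn hL horth.
pose L := length l.
pose y (i : 'I_L) : vec m := phi u (List.nth i l vzero).
have HiL : forall i : 'I_L, (i < length l)%coq_nat by move=> i; apply/ltP; exact: ltn_ord.
have Hy : forall i, enorm (y i) <= r.
  move=> i. rewrite /y. apply: Rle_trans (enorm_phi horth _) _. apply: hl. exact: nth_In.
case: (classic (exists i j : 'I_L, i <> j /\ enorm (vsub (y i) (y j)) <= eps * r)) => [[i [j [Hij Hc]]]|Hno].
  pose t := List.nth i l vzero. pose s := List.nth j l vzero.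
  pose w := vsub t s.
  exists t, s, (vsub w (Pr u w)), (Pr u w).
  split; first exact: nth_In. split; first exact: nth_In.
  split.
    move=> Ets. apply: Hij. apply: val_inj.
    exact: (proj1 (NoDup_nth l vzero) hnd _ _ (HiL i) (HiL j) Ets).
  split.
    apply: functional_extensionality => k; rewrite /vadd {2}/vsub. rewrite /w /vsub; ring.
  split.
    by rewrite (enorm_Pr horth) /w (phi_sub u t s).
  move=> k. exact: Pr_orth.
exfalso.
have Hsep : forall i j : 'I_L, i <> j -> eps * r < enorm (vsub (y i) (y j)).
  move=> i j Hij. apply: Rnot_le_lt => H. apply: Hno. by exists i, j.
have := packing hr (Rmult_lt_0_compat _ _ he hr) Hy Hsep.
have -> : (2 * r + eps * r) / (eps * r) = 2 / eps + 1 by field; lra.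
have He2 : 0 < 2 / eps by apply: Rdiv_lt_0_compat; lra.
have Hl1 : 1 <= 2 / eps + 1 by lra.
have := Rle_pow _ _ _ Hl1 (elimT leP hmn). rewrite /L. lra.
Qed.

Lemma vsub_neq0 d (t s : vec d) : t <> s -> vsub t s <> (fun _ => 0).
Proof.
move=> Hts E. apply: Hts. apply: functional_extensionality => i.
have := congr1 (fun f => f i) E. rewrite /vsub /=. lra.
Qed.

Lemma build d n r eps (T : vec d -> Prop) (l : list (vec d)) :
  0 < r -> 0 < eps -> (forall x, T x -> enorm x <= r) -> NoDup l ->
  (forall x, In x l -> T x) -> (2 / eps + 1) ^ n <= INR (length l) ->
  forall m, leq m n -> exists t s u v : nat -> vec d,
    (forall k, (k < m)%coq_nat -> T (t k) /\ T (s k) /\ vsub (t k) (s k) <> (fun _ => 0)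
               /\ vsub (t k) (s k) = vadd (u k) (v k) /\ enorm (v k) <= eps * r) /\
    (forall k k', (k < m)%coq_nat -> (k' < m)%coq_nat -> k <> k' -> dot (u k) (u k') = 0).
Proof.
move=> hr he hT hnd hlT hL.
elim=> [|m IH] hmn.
  exists (fun _ => vzero), (fun _ => vzero), (fun _ => vzero), (fun _ => vzero).
  split => k; [lia| move=> k'; lia].
have [t [s [u [v [H1 H2]]]]] := IH (ltnW hmn).
pose u' (j : 'I_m) := u (nat_of_ord j).
have horth : forall j j' : 'I_m, j <> j' -> dot (u' j) (u' j') = 0.
  move=> j j' Hjj. apply: H2; try (apply/ltP; exact: ltn_ord).
  move=> E; apply: Hjj; exact: val_inj.
have hl : forall x, In x l -> enorm x <= r by move=> x Hx; apply: hT; apply: hlT.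
have [t0 [s0 [uu [vv [Ht [Hs [Hne [Heq [Hv Hu]]]]]]]]] := step hr he hl hnd hmn hL horth.
exists (fun k => if k == m then t0 else t k), (fun k => if k == m then s0 else s k),
       (fun k => if k == m then uu else u k), (fun k => if k == m then vv else v k).
split.
  move=> k Hk. case: (eqVneq k m) => [Ek|Hkm].
    split; first exact: hlT. split; first exact: hlT.
    split; first exact: vsub_neq0. by split.
  apply: H1. have : k <> m by move=> E; rewrite E eqxx in Hkm. lia.
move=> k k' Hk Hk' Hkk.
case: (eqVneq k m) => [Ek|Hkm]; case: (eqVneq k' m) => [Ek'|Hk'm].
- by exfalso; apply: Hkk; rewrite Ek Ek'.
- have Nk' : k' <> m by move=> E; rewrite E eqxx in Hk'm.
  have Hk'' : (k' < m)%nat by apply/ltP; lia.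
  exact: (Hu (Ordinal Hk'')).
- have Nk : k <> m by move=> E; rewrite E eqxx in Hkm.
  have Hk'' : (k < m)%nat by apply/ltP; lia.
  rewrite dot_comm. exact: (Hu (Ordinal Hk'')).
- apply: H2 => //.
  + have : k <> m by move=> E; rewrite E eqxx in Hkm. lia.
  + have : k' <> m by move=> E; rewrite E eqxx in Hk'm. lia.
Qed.

Delimit Scope nat_scope with N.

Theorem lemma3p5 (d n : nat) (r eps : R) (T : vec d -> Prop)
  (hr : (0 < r)%R) (heps0 : (0 < eps)%R) (heps1 : (eps < 1)%R) (hn : (1 <= n)%N)
  (hT : forall x, T x -> (enorm x <= r)%R)
  (hcard : card_ge T ((2 / eps + 1) ^ n)%R) :
  exists (t s u v : 'I_n -> vec d),
    (forall k, T (t k) /\ T (s k) /\ vsub (t k) (s k) <> (fun _ => 0%R)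
               /\ vsub (t k) (s k) = vadd (u k) (v k)
               /\ (enorm (v k) <= eps * r)%R) /\
    (forall k l, k <> l -> dot (u k) (u l) = 0%R).
Proof.
have [l [hnd [hlT hL]]] := hcard.
have [t [s [u [v [H1 H2]]]]] := build hr heps0 hT hnd hlT hL (leqnn n).
exists (fun k => t (nat_of_ord k)), (fun k => s (nat_of_ord k)),
       (fun k => u (nat_of_ord k)), (fun k => v (nat_of_ord k)).
split.
  move=> k. apply: H1. apply/ltP; exact: ltn_ord.
move=> k k' Hkk. apply: H2; try (apply/ltP; exact: ltn_ord).
move=> E; apply: Hkk; exact: val_inj.
Qed.
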